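(* Let $n\ge0$ and run the Tiden–Arnborg algorithm on $\sigma(n)$, performing sum transformations level by level. For every level $k<n+3$, a path of lateral edges from $x_{1^{k-1}}$ to $y_{2^{k-1}}$ is created.
   Context: Variables are $T$, $x_s$, $y_s$ with $s$ a string over $\{1,2\}$ ($x=x_\varepsilon$, $y=y_\varepsilon$); the level of $x_s$ or $y_s$ is $|s|+1$. For $n\ge0$, $\sigma(n)$ consists of, for all $0\le i\le n$: $x_{1^i}=^?x_{1^{i+1}}+x_{1^i2}$, $y_{2^i}=^?y_{2^i1}+y_{2^{i+1}}$, $y_{2^i1}=^?T\times x_{1^i2}$, $x=^?T\times y$, $x_{1^{i+1}}=^?x_{1^{i+2}}+x_{1^{i+1}2}$; its variables occupy levels $1,\dots,n+3$. A lateral edge from $u$ to $v$ means the equation $u=^?T\times v$ is present. A variable $U_i$ ($U\in\{x,y\}$) is a peak if the system contains both $U_i=^?U_{i1}+U_{i2}$ and $U_i=^?T\times W_j$. A sum transformation at a peak $U_i$ replaces $U_i=^?U_{i1}+U_{i2}$ by $W_j=^?W_{j1}+W_{j2}$, $U_{i1}=^?T\times W_{j1}$, $U_{i2}=^?T\times W_{j2}$ (keeping $U_i=^?T\times W_j$), with $W_{j1},W_{j2}$ identified with the existing children of $W_j$ if $W_j$ already has a sum equation. The Tiden–Arnborg algorithm (for $x\times(y+z)=x\times y+x\times z$) applies sum transformations as long as possible, completing all those at one level before the next. *)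

(* Defs.v *)
(* Systems of unification problems for x*(y+z)=x*y+x*z
   as they arise when running the Tiden-Arnborg algorithm on sigma(n). *)
From Stdlib Require Import List Relations.
Import ListNotations.

Inductive dir := D1 | D2.
Inductive tag := X | Y.

(* variable U_s, U in {x,y}, s a string over {1,2}; x = (X,[]), y = (Y,[]) *)
Definition var : Type := (tag * list dir)%type.

Definition level (v : var) : nat := S (length (snd v)).

Definition child (v : var) (d : dir) : var := (fst v, snd v ++ [d]).

(* A system: the set of variables U having a sum equation
   U =? U_1 + U_2 (children are always named by extending the index string),
   and the lateral edges: lat u v  iff the equation u =? T x v is present. *)
Record system := mkSystem {
  sums : var -> Prop;
  lat  : var -> var -> Prop
}.

Definition x_ (s : list dir) : var := (X, s).
Definition y_ (s : list dir) : var := (Y, s).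
Definition ones (i : nat) : list dir := repeat D1 i.
Definition twos (i : nat) : list dir := repeat D2 i.

(* sigma(n): for all 0 <= i <= n:
   x_{1^i} = x_{1^{i+1}} + x_{1^i 2},  y_{2^i} = y_{2^i 1} + y_{2^{i+1}},
   y_{2^i 1} = T x x_{1^i 2},  x = T x y,
   x_{1^{i+1}} = x_{1^{i+2}} + x_{1^{i+1} 2}. *)
Definition sigma (n : nat) : system := {|
  sums := fun v => exists i, i <= n /\
            (v = x_ (ones i) \/ v = y_ (twos i) \/ v = x_ (ones (S i)));
  lat := fun u v => exists i, i <= n /\
            ((u = x_ [] /\ v = y_ []) \/
             (u = y_ (twos i ++ [D1]) /\ v = x_ (ones i ++ [D2])))
|}.

Definition peak (s : system) (u w : var) : Prop := sums s u /\ lat s u w.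

(* sum transformation at peak u with lateral equation u =? T x w:
   remove u = u1 + u2, add w = w1 + w2 (identified with the existing one if
   present), add u1 =? T x w1 and u2 =? T x w2, keep u =? T x w. *)
Definition sum_transform (s : system) (u w : var) : system := {|
  sums := fun v => (sums s v /\ v <> u) \/ v = w;
  lat := fun a b => lat s a b \/
            (a = child u D1 /\ b = child w D1) \/
            (a = child u D2 /\ b = child w D2)
|}.

Inductive ta_reachable (n : nat) : system -> Prop :=
| ta_start : ta_reachable n (sigma n)
| ta_step : forall s u w,
    ta_reachable n s ->
    peak s u w ->
    (forall u' w', peak s u' w' -> level u <= level u') ->
    ta_reachable n (sum_transform s u w).

Definition lat_path (s : system) : var -> var -> Prop :=
  clos_refl_trans var (lat s).

(* Main.v *)
Require Import Defs.
From Stdlib Require Import List Relations Lia Classical.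
Import ListNotations.

Lemma twos_snoc i : twos (S i) = twos i ++ [D2].
Proof. unfold twos; induction i; simpl; [reflexivity| now rewrite <- IHi]. Qed.
Lemma ones_snoc i : ones (S i) = ones i ++ [D1].
Proof. unfold ones; induction i; simpl; [reflexivity| now rewrite <- IHi]. Qed.

Lemma child_inj p q d e : child p d = child q e -> p = q /\ d = e.
Proof.
  destruct p as [t l], q as [t' l']; unfold child; simpl; intros H.
  injection H as H1 H2. apply app_inj_tail in H2 as [-> ->]. subst; auto.
Qed.

Lemma twos_D1 i l : twos i <> l ++ [D1].
Proof.
  destruct i; intro H. destruct l; discriminate.
  rewrite twos_snoc in H. apply app_inj_tail in H as [_ H]; discriminate.
Qed.

Lemma child_twos u d i : child u d = y_ (twos i) -> exists i', u = y_ (twos i') /\ d = D2.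
Proof.
  destruct u as [t l]; unfold child, y_; simpl; intro H; injection H as H1 H2; subst.
  destruct i. destruct l; discriminate.
  rewrite twos_snoc in H2. apply app_inj_tail in H2 as [-> ->]. eauto.
Qed.

Lemma child_nil u d t : child u d <> (t, []).
Proof. destruct u as [t' l]; unfold child; simpl; intro H; injection H; destruct l; discriminate. Qed.

Lemma sig_len n a b : lat (sigma n) a b -> length (snd a) = length (snd b).
Proof.
  simpl; intros [i [_ [[-> ->]|[-> ->]]]]; simpl; auto.
  unfold twos, ones; rewrite !length_app, !repeat_length; reflexivity.
Qed.

Record Inv n (s : system) (Sv Tv : var -> Prop) : Prop := {
  inv_a : forall v, Sv v -> sums s v \/ Tv v;
  inv_b : forall v, Tv v -> exists w, lat s v w /\ Sv w /\ lat s (child v D1) (child w D1)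
                                /\ lat s (child v D2) (child w D2);
  inv_c : forall u w w', lat s u w -> lat s u w' -> w = w';
  inv_d : forall i, i <= S n -> Sv (x_ (ones i));
  inv_e : forall a b, lat (sigma n) a b -> lat s a b;
  inv_g : forall i z, ~ lat s (y_ (twos i)) z;
  inv_h : forall a b, lat s a b -> lat (sigma n) a b \/
            exists p q d, a = child p d /\ b = child q d /\ lat s p q;
  inv_i : forall a b, lat s a b -> length (snd a) = length (snd b)
}.

Lemma twos_inj i j : twos i = twos j -> i = j.
Proof. intro H. apply (f_equal (@length _)) in H. unfold twos in H; rewrite !repeat_length in H; auto. Qed.

Lemma inv_init n : Inv n (sigma n) (fun v => exists i, i <= S n /\ v = x_ (ones i)) (fun _ => False).
Proof.
  constructor.
  - intros v [i [Hi ->]]. left. simpl.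
    destruct (PeanoNat.Nat.eq_dec i (S n)) as [->|Hne].
    + exists n; split; auto.
    + exists i; split; [lia| auto].
  - intros v [].
  - simpl. intros u w w' [i [_ H1]] [j [_ H2]].
    destruct H1 as [[-> ->]|[-> ->]], H2 as [[E ->]|[E ->]]; try discriminate; auto.
    injection E as E. apply app_inj_tail in E as [E _]. apply twos_inj in E; subst; auto.
  - intros i Hi; eauto.
  - auto.
  - simpl. intros i z [j [_ [[E _]|[E _]]]]; try discriminate.
    injection E as E. exact (twos_D1 _ _ E).
  - auto.
  - apply sig_len.
Qed.

Lemma inv_step n s Sv Tv u w : Inv n s Sv Tv -> peak s u w ->
  Inv n (sum_transform s u w) (fun v => Sv v \/ v = w) (fun v => Tv v \/ v = u).
Proof.
  intros I [Hs Hl].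
  assert (old : forall d z, lat s (child u d) z -> z = child w d).
  { intros d z Hz. destruct (inv_h _ _ _ _ I _ _ Hz) as [Hsg|[p [q [d' [E1 [E2 Hpq]]]]]].
    - simpl in Hsg. destruct Hsg as [i [_ [[E _]|[E _]]]].
      + exfalso; exact (child_nil _ _ _ E).
      + destruct u as [t l]; unfold child, y_ in E; simpl in E; injection E as -> E.
        apply app_inj_tail in E as [-> _]. exfalso; exact (inv_g _ _ _ _ I _ _ Hl).
    - apply child_inj in E1 as [<- <-]. subst. f_equal. eapply (inv_c _ _ _ _ I); eauto. }
  constructor.
  - intros v [Hv| ->].
    + destruct (inv_a _ _ _ _ I v Hv) as [H|H]; [|auto].
      destruct (classic (v = u)) as [->|Hne]; [auto|]. left; simpl; auto.
    + left; simpl; auto.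
  - intros v [Hv| ->].
    + destruct (inv_b _ _ _ _ I v Hv) as [w0 [A [B [C D]]]].
      exists w0; simpl; repeat split; auto.
    + exists w; simpl; repeat split; auto.
  - simpl. intros a b c H1 H2.
    destruct H1 as [H1|[[-> ->]|[-> ->]]], H2 as [H2|[[E ->]|[E ->]]].
    + eapply (inv_c _ _ _ _ I); eauto.
    + rewrite E in H1; apply old in H1; auto.
    + rewrite E in H1; apply old in H1; auto.
    + symmetry; apply old; auto.
    + auto.
    + apply child_inj in E as [_ E]; discriminate.
    + symmetry; apply old; auto.
    + apply child_inj in E as [_ E]; discriminate.
    + auto.
  - intros i Hi; left; eapply (inv_d _ _ _ _ I); eauto.
  - intros a b H; left; eapply (inv_e _ _ _ _ I); eauto.
  - simpl. intros i z [H|[[E _]|[E _]]].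
    + exact (inv_g _ _ _ _ I _ _ H).
    + symmetry in E; apply child_twos in E as [i' [-> _]]; exact (inv_g _ _ _ _ I _ _ Hl).
    + symmetry in E; apply child_twos in E as [i' [-> _]]; exact (inv_g _ _ _ _ I _ _ Hl).
  - simpl. intros a b [H|[[-> ->]|[-> ->]]].
    + destruct (inv_h _ _ _ _ I _ _ H) as [H'|[p [q [d [E1 [E2 Hpq]]]]]]; auto.
      right; exists p, q, d; auto.
    + right; exists u, w, D1; auto.
    + right; exists u, w, D2; auto.
  - simpl. intros a b [H|[[-> ->]|[-> ->]]].
    + eapply (inv_i _ _ _ _ I); eauto.
    + destruct u, w; unfold child; simpl; rewrite !length_app.
      pose proof (inv_i _ _ _ _ I _ _ Hl); simpl in *; lia.
    + destruct u, w; unfold child; simpl; rewrite !length_app.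
      pose proof (inv_i _ _ _ _ I _ _ Hl); simpl in *; lia.
Qed.

Lemma inv_reach n s : ta_reachable n s -> exists Sv Tv, Inv n s Sv Tv.
Proof.
  induction 1 as [|s u w _ [Sv [Tv I]] Hp _].
  - eexists; eexists; apply inv_init.
  - eexists; eexists; eapply inv_step; eauto.
Qed.

Lemma push n s Sv Tv k : Inv n s Sv Tv -> (forall u w, peak s u w -> k <= level u) ->
  forall a b, clos_refl_trans_1n _ (lat s) a b -> Sv a -> level a < k ->
  forall d, lat_path s (child a d) (child b d).
Proof.
  intros I Hk a b P. induction P as [a|a a1 b H P IH]; intros Ha Hlev d.
  - apply rt_refl.
  - destruct (inv_a _ _ _ _ I a Ha) as [Hs|Ht].
    + specialize (Hk a a1 (conj Hs H)). lia.
    + destruct (inv_b _ _ _ _ I a Ht) as [w [Hw [Sw [C1 C2]]]].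
      assert (w = a1) by (eapply (inv_c _ _ _ _ I); eauto). subst w.
      assert (level a1 < k).
      { unfold level in *. pose proof (inv_i _ _ _ _ I _ _ H). lia. }
      eapply rt_trans; [apply rt_step; destruct d; eauto| apply IH; auto].
Qed.

Theorem lemma5 (n : nat) (s : system) (k : nat) :
  ta_reachable n s ->
  1 <= k -> k < n + 3 ->
  (* all sum transformations at levels < k have been completed *)
  (forall u w, peak s u w -> k <= level u) ->
  lat_path s (x_ (ones (k - 1))) (y_ (twos (k - 1))).
Proof.
  intros R Hk1 Hk2 Hk.
  destruct (inv_reach _ _ R) as [Sv [Tv I]].
  assert (forall j, j + 1 <= k -> lat_path s (x_ (ones j)) (y_ (twos j))).
  { induction j as [|j IH]; intros Hj.
    - apply rt_step. apply (inv_e _ _ _ _ I). simpl. exists 0; split; [lia| auto].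
    - assert (P := IH ltac:(lia)). apply clos_rt_rt1n in P.
      assert (Sx : Sv (x_ (ones j))) by (apply (inv_d _ _ _ _ I); lia).
      assert (Lv : level (x_ (ones j)) < k) by (unfold level, ones; simpl; rewrite repeat_length; lia).
      pose proof (push _ _ _ _ _ I Hk _ _ P Sx Lv D1) as P1.
      pose proof (push _ _ _ _ _ I Hk _ _ P Sx Lv D2) as P2.
      unfold child in P1, P2; simpl in P1, P2.
      rewrite ones_snoc, twos_snoc.
      eapply rt_trans; [exact P1|]. eapply rt_trans; [|exact P2].
      apply rt_step, (inv_e _ _ _ _ I). simpl. exists j. split; [lia| right; auto]. }
  apply H; lia.
Qed.
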